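(* Let $(X,Y)$ be a splitting of a finite Weyl group $W$ with simple roots $\Delta$. Then: (1) $X$ has a unique maximal element $x_0$ under left weak order and $Y$ has a unique maximal element $y_0$ under right weak order, and $x_0y_0=w_0$. (2) For every $J\subseteq\Delta$, $(X\cap W_J,\,Y\cap W_J)$ is a splitting of $W_J$.
   Context: $W$ is the Weyl group of a finite crystallographic root system with simple roots $\Delta$, generated by simple reflections $s_\alpha$; $\ell$ is Coxeter length and $w_0$ is the longest element. Left weak order: $v\leq_L w$ iff $w=zv$ with $\ell(w)=\ell(z)+\ell(v)$; right weak order: $v\leq_R w$ iff $w=vz$ with $\ell(w)=\ell(v)+\ell(z)$. For $J\subseteq\Delta$, $W_J$ is the parabolic subgroup generated by $\{s_\alpha:\alpha\in J\}$, with the restricted length function. A pair $(X,Y)$ of subsets of a group $G$ (here $W$ or $W_J$) is a splitting of $G$ if the map $X\times Y\to G$, $(x,y)\mapsto xy$, is a bijection with $\ell(xy)=\ell(x)+\ell(y)$ for all $x\in X$, $y\in Y$. *)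

(* Defs.v *)
From HB Require Import structures.
From mathcomp Require Import all_boot all_order all_algebra.
Set Implicit Arguments. Unset Strict Implicit. Unset Printing Implicit Defensive.
Import Order.TTheory GRing.Theory Num.Theory.
Local Open Scope ring_scope.

Section WeylDefs.
Variables (R : realFieldType) (n : nat).
Local Notation vec := 'rV[R]_n.
Local Notation mx := 'M[R]_n.

Definition dot (u v : vec) : R := (u *m v^T) 0 0.

Definition reflv (a v : vec) : vec := v - (2 * dot v a / dot a a) *: a.
Definition refl_mx (a : vec) : mx := 1%:M - (2 / dot a a) *: (a^T *m a).

Definition is_root_system (Phi : seq vec) : Prop :=
  [/\ 0 \notin Phi,
      (<<Phi>>%VS = fullv),
      (forall a b, a \in Phi -> b \in Phi -> reflv a b \in Phi),
      (forall a (c : R), a \in Phi -> c *: a \in Phi -> c = 1 \/ c = -1) &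
      (forall a b, a \in Phi -> b \in Phi ->
         exists z : int, 2 * dot b a / dot a a = z%:~R)].

Definition is_simple_system (Phi Delta : seq vec) : Prop :=
  [/\ {subset Delta <= Phi},
      free Delta &
      (forall b, b \in Phi -> exists c : 'I_(size Delta) -> int,
         b = \sum_(i < size Delta) (c i)%:~R *: Delta`_i /\
         ((forall i, 0 <= c i) \/ (forall i, c i <= 0)))].

Definition prodw (w : seq vec) : mx := foldr (fun a M => refl_mx a *m M) 1%:M w.

Definition inW (J : seq vec) (g : mx) : Prop :=
  exists w : seq vec, {subset w <= J} /\ g = prodw w.

Definition coxlen (Delta : seq vec) (g : mx) (k : nat) : Prop :=
  (exists w : seq vec, [/\ {subset w <= Delta}, size w = k & g = prodw w]) /\
  (forall w : seq vec, {subset w <= Delta} -> g = prodw w -> (k <= size w)%N).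

Definition len_add (Delta : seq vec) (x y : mx) : Prop :=
  forall a b, coxlen Delta x a -> coxlen Delta y b -> coxlen Delta (x *m y) (a + b).

Definition leL (Delta : seq vec) (v w : mx) : Prop :=
  [/\ inW Delta v, inW Delta w &
      exists z, [/\ inW Delta z, w = z *m v & len_add Delta z v]].
Definition leR (Delta : seq vec) (v w : mx) : Prop :=
  [/\ inW Delta v, inW Delta w &
      exists z, [/\ inW Delta z, w = v *m z & len_add Delta v z]].

Definition longest (Delta : seq vec) (w0 : mx) : Prop :=
  inW Delta w0 /\
  forall w a b, inW Delta w -> coxlen Delta w a -> coxlen Delta w0 b -> (a <= b)%N.

Definition is_maximal (le : mx -> mx -> Prop) (X : mx -> Prop) (x : mx) : Prop :=
  X x /\ forall x', X x' -> le x x' -> x' = x.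
Definition unique_maximal (le : mx -> mx -> Prop) (X : mx -> Prop) (x : mx) : Prop :=
  is_maximal le X x /\ forall x', is_maximal le X x' -> x' = x.

(* (X, Y) is a splitting of the group G (subset of W), lengths measured in W
   (restricted length function) *)
Definition splitting (Delta : seq vec) (G X Y : mx -> Prop) : Prop :=
  [/\ (forall x, X x -> G x) /\ (forall y, Y y -> G y),
      (forall x y, X x -> Y y -> G (x *m y)),
      (forall g, G g -> exists x y, [/\ X x, Y y & g = x *m y]),
      (forall x y x' y', X x -> Y y -> X x' -> Y y' ->
         x *m y = x' *m y' -> x = x' /\ y = y') &
      (forall x y, X x -> Y y -> len_add Delta x y)].

End WeylDefs.

(* Main.v *)
Require Import Defs.
From HB Require Import structures.
From mathcomp Require Import all_boot all_order all_algebra.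
From Stdlib Require Import Classical.
From mathcomp Require Import ring zify.
Import Order.TTheory GRing.Theory Num.Theory.
Local Open Scope ring_scope.
Set Implicit Arguments. Unset Strict Implicit. Unset Printing Implicit Defensive.

Section Basic.
Variables (R : realFieldType) (n : nat).
Local Notation vec := 'rV[R]_n.
Local Notation mx := 'M[R]_n.

Lemma dotE (u v : vec) : dot u v = \sum_i u 0 i * v 0 i.
Proof. by rewrite /dot !mxE; apply: eq_bigr => i _; rewrite mxE. Qed.

Lemma dotC (u v : vec) : dot u v = dot v u.
Proof. by rewrite !dotE; apply: eq_bigr => i _; rewrite mulrC. Qed.

Lemma dotDl (u v w : vec) : dot (u + v) w = dot u w + dot v w.
Proof. by rewrite !dotE -big_split; apply: eq_bigr => i _; rewrite mxE mulrDl. Qed.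

Lemma dotZl c (u v : vec) : dot (c *: u) v = c * dot u v.
Proof. by rewrite !dotE mulr_sumr; apply: eq_bigr => i _; rewrite mxE mulrA. Qed.

Lemma dotNl (u v : vec) : dot (- u) v = - dot u v.
Proof. by rewrite -scaleN1r dotZl mulN1r. Qed.

Lemma dotBl (u v w : vec) : dot (u - v) w = dot u w - dot v w.
Proof. by rewrite dotDl dotNl. Qed.

Lemma dotBr (u v w : vec) : dot w (u - v) = dot w u - dot w v.
Proof. by rewrite dotC dotBl !(dotC w). Qed.

Lemma dotZr c (u v : vec) : dot v (c *: u) = c * dot v u.
Proof. by rewrite dotC dotZl dotC. Qed.

Lemma dot_neq0 (u : vec) : u != 0 -> dot u u != 0.
Proof.
move=> u0; rewrite dotE psumr_neq0 => [|i _]; last by rewrite -expr2 sqr_ge0.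
have [i ui] : exists i, u 0 i != 0.
  apply/existsP; apply: contraR u0; rewrite negb_exists => /forallP h.
  by apply/eqP/rowP => j; rewrite mxE; move: (h j); rewrite negbK => /eqP.
apply/hasP; exists i; first by rewrite mem_index_enum.
by rewrite lt_def -expr2 sqr_ge0 andbT expf_neq0.
Qed.

Lemma mx_ext (A B : mx) : (forall v : vec, v *m A = v *m B) -> A = B.
Proof. by move=> h; apply/row_matrixP => i; rewrite !rowE h. Qed.

Lemma mul_refl (a v : vec) : v *m refl_mx a = reflv a v.
Proof.
rewrite /refl_mx /reflv mulmxBr mulmx1 -scalemxAr mulmxA.
rewrite [v *m a^T]mx11_scalar mul_scalar_mx scalerA; congr (_ - _ *: _).
by rewrite /dot mulrAC.
Qed.

Lemma refl_aa (a : vec) : a != 0 -> a *m refl_mx a = - a.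
Proof.
move=> a0; rewrite mul_refl /reflv mulfK ?dot_neq0 // scaler_nat mulr2n.
by rewrite opprD addrA subrr add0r.
Qed.

Lemma refl_invol (a : vec) : a != 0 -> refl_mx a *m refl_mx a = 1%:M.
Proof.
move=> a0; apply: mx_ext => v; rewrite mulmxA !mul_refl mulmx1.
have d0 := dot_neq0 a0.
rewrite {1}/reflv /reflv dotBl dotZl.
set t := 2 * dot v a / dot a a.
have -> : 2 * (dot v a - t * dot a a) / dot a a = - t.
  by rewrite /t; field.
by rewrite scaleNr opprK subrK.
Qed.

Lemma refl_dot (a x y : vec) : a != 0 ->
  dot (x *m refl_mx a) (y *m refl_mx a) = dot x y.
Proof.
move=> a0; have d0 := dot_neq0 a0.
rewrite !mul_refl /reflv dotBl !dotBr !dotZl !dotZr.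
rewrite [dot a y]dotC.
by field.
Qed.

Lemma refl_conj (a v : vec) : a != 0 -> v != 0 ->
  refl_mx (v *m refl_mx a) = refl_mx a *m refl_mx v *m refl_mx a.
Proof.
move=> a0 v0; apply: mx_ext => u.
rewrite !mulmxA [u *m refl_mx a *m refl_mx v]mul_refl mul_refl /reflv.
rewrite mulmxBl -scalemxAl -mulmxA refl_invol // mulmx1.
rewrite refl_dot //; congr (_ - _ *: _); congr (2 * _ / _).
by rewrite -{1}(@refl_dot a u (v *m refl_mx a) a0) -mulmxA refl_invol // mulmx1.
Qed.

End Basic.

Section Words.
Variables (R : realFieldType) (n : nat).
Local Notation vec := 'rV[R]_n.
Local Notation mx := 'M[R]_n.

Lemma prodw_cat (w1 w2 : seq vec) : prodw (w1 ++ w2) = prodw w1 *m prodw w2.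
Proof. by elim: w1 => [|a w1 IH] /=; rewrite ?mul1mx // IH mulmxA. Qed.

Lemma prodw_rev (w : seq vec) : (forall a, a \in w -> a != 0) ->
  prodw w *m prodw (rev w) = 1%:M.
Proof.
elim: w => [|a w IH] h /=; first by rewrite mulmx1.
rewrite rev_cons -cats1 prodw_cat /= mulmx1 -mulmxA (mulmxA (prodw w)) IH.
  by rewrite mul1mx refl_invol // h // mem_head.
by move=> b bw; apply: h; rewrite inE bw orbT.
Qed.

Lemma prodw_rev' (w : seq vec) : (forall a, a \in w -> a != 0) ->
  prodw (rev w) *m prodw w = 1%:M.
Proof.
move=> h; rewrite -{2}(revK w) prodw_rev // => a; rewrite mem_rev; exact: h.
Qed.

Lemma inv_uniq (u v : seq vec) : (forall a, a \in u -> a != 0) ->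
  (forall a, a \in v -> a != 0) ->
  prodw u = prodw v -> prodw (rev u) = prodw (rev v).
Proof.
move=> hu hv e.
by rewrite -[prodw (rev u)]mulmx1 -(prodw_rev hv) mulmxA -e prodw_rev' // mul1mx.
Qed.

End Words.

Section Root.
Variables (R : realFieldType) (n : nat) (Phi Delta : seq 'rV[R]_n).
Hypothesis hPhi : is_root_system Phi.
Hypothesis hD : is_simple_system Phi Delta.
Local Notation vec := 'rV[R]_n.
Local Notation mx := 'M[R]_n.
Local Notation m := (size Delta).
Local Notation crd i v := (coord (in_tuple Delta) i v).

Lemma Phi0 a : a \in Phi -> a != 0.
Proof. by case: hPhi => h0 _ _ _ _; apply: contraTneq => ->. Qed.

Lemma DPhi : {subset Delta <= Phi}.
Proof. by case: hD. Qed.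

Lemma Dfree : free Delta.
Proof. by case: hD. Qed.

Lemma D0 a : a \in Delta -> a != 0.
Proof. by move/DPhi/Phi0. Qed.

Lemma Phirefl a b : a \in Phi -> b \in Phi -> b *m refl_mx a \in Phi.
Proof. by case: hPhi => _ _ h _ _ ha hb; rewrite mul_refl h. Qed.

Lemma crd_D (i j : 'I_m) : crd j (Delta`_i) = (i == j)%:R.
Proof. exact: (@coord_free _ _ _ (in_tuple Delta) i j Dfree). Qed.

Definition pos (v : vec) := forall i : 'I_m, 0 <= crd i v.
Definition neg (v : vec) := forall i : 'I_m, crd i v <= 0.

Lemma span_root b : b \in Phi ->
  b = \sum_(i < m) crd i b *: Delta`_i /\ (pos b \/ neg b).
Proof.
case: hD => _ fD h /h [c [-> hc]].
have E : forall j, crd j (\sum_(i < m) (c i)%:~R *: Delta`_i) = (c j)%:~R.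
  by move=> j; apply: (@coord_sum_free _ _ _ (in_tuple Delta) (fun i => (c i)%:~R) j fD).
split; first by apply: eq_bigr => i _; rewrite E.
case: hc => hc; [left|right] => i; rewrite E; [by rewrite ler0z | by rewrite lerz0].
Qed.

Lemma posneg b : b \in Phi -> pos b \/ neg b.
Proof. by case/span_root. Qed.

Lemma not_posneg b : b \in Phi -> pos b -> neg b -> False.
Proof.
move=> bP p q; have [e _] := span_root bP.
have := Phi0 bP; rewrite e big1 ?eqxx // => i _.
have -> : crd i b = 0 by apply/eqP; rewrite eq_le p q.
by rewrite scale0r.
Qed.

Lemma crdB i (v a : vec) c : crd i (v - c *: a) = crd i v - c * crd i a.
Proof. by rewrite linearB linearZ. Qed.

Lemma crdN i (v : vec) : crd i (- v) = - crd i v.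
Proof. by rewrite linearN. Qed.

Lemma idx a : a \in Delta -> {k : 'I_m | a = Delta`_k}.
Proof.
move=> aD; have k : (index a Delta < m)%N by rewrite index_mem.
by exists (Ordinal k); rewrite /= nth_index.
Qed.

Lemma pos_D a : a \in Delta -> pos a.
Proof. by case/idx => k -> i; rewrite crd_D ler0n. Qed.

Lemma negN v : pos v -> neg (- v).
Proof. by move=> p i; rewrite crdN oppr_le0. Qed.

Lemma posN v : neg v -> pos (- v).
Proof. by move=> p i; rewrite crdN oppr_ge0. Qed.

Lemma L1 a b : a \in Delta -> b \in Phi -> pos b -> b != a ->
  pos (b *m refl_mx a).
Proof.
move=> aD bP pb ba; case: (idx aD) => k ek.
have bs : b *m refl_mx a \in Phi by apply: Phirefl => //; exact: DPhi.
have [j /andP [jk cj]] : exists j, (j != k) && (0 < crd j b).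
  apply/existsP; apply: contraR ba; rewrite negb_exists => /forallP h.
  have [e _] := span_root bP.
  have eb : b = crd k b *: a.
    rewrite {1}e (bigD1 k) //= big1 ?addr0 -?ek // => i ik.
    have : ~~ ((i != k) && (0 < crd i b)) := h i.
    rewrite ik /= => h'; have -> : crd i b = 0.
      by apply/eqP; rewrite eq_le pb andbT leNgt.
    by rewrite scale0r.
  case: hPhi => _ _ _ hr _.
  have := hr a (crd k b) (DPhi aD); rewrite -eb => /(_ bP) [e1|e1].
    by rewrite eb e1 scale1r.
  by move: (pb k); rewrite e1 oppr_ge0 ler10.
case: (posneg bs) => // nb; exfalso.
move: (nb j); rewrite mul_refl /reflv crdB ek crd_D eq_sym (negPf jk) mulr0 subr0.
by rewrite leNgt cj.
Qed.

Lemma act_Phi (w : seq vec) b : {subset w <= Delta} -> b \in Phi ->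
  b *m prodw w \in Phi.
Proof.
elim: w b => [|a w IH] b hw bP /=; first by rewrite mulmx1.
rewrite mulmxA; apply: IH; first by move=> x xw; apply: hw; rewrite inE xw orbT.
by apply: Phirefl => //; apply: DPhi; apply: hw; rewrite mem_head.
Qed.

Definition delw (i : nat) (w : seq vec) := take i w ++ drop i.+1 w.

Lemma size_delw i (w : seq vec) : (i < size w)%N -> size (delw i w) = (size w).-1.
Proof.
move=> h; rewrite /delw size_cat size_take size_drop h.
by case: (size w) h => // k; rewrite ltnS => h; rewrite subSS subnKC.
Qed.

Lemma delw_sub i (w : seq vec) : {subset delw i w <= w}.
Proof. by move=> x; rewrite mem_cat => /orP [/mem_take|/mem_drop]. Qed.

Lemma del (w : seq vec) : {subset w <= Delta} -> forall v, v \in Phi -> pos v ->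
  neg (v *m prodw w) ->
  exists2 i, (i < size w)%N & refl_mx v *m prodw w = prodw (delw i w).
Proof.
elim: w => [|a w IH] hw v vP pv /=.
  by rewrite mulmx1 => nv; case: (not_posneg vP pv nv).
have aD : a \in Delta by apply: hw; rewrite mem_head.
have hw' : {subset w <= Delta} by move=> x xw; apply: hw; rewrite inE xw orbT.
move=> nv; case: (eqVneq v a) => [->|va].
  by exists 0%N => //; rewrite mulmxA refl_invol ?D0 // mul1mx /delw drop1.
have v'P : v *m refl_mx a \in Phi by apply: Phirefl => //; exact: DPhi.
have pv' := L1 aD vP pv va.
rewrite mulmxA in nv; case: (IH hw' _ v'P pv' nv) => i iw e.
exists i.+1 => //; rewrite /delw /= prodw_cat -prodw_cat -/(delw i w) -e.
by rewrite (refl_conj (D0 aD) (Phi0 vP)) !mulmxA refl_invol ?(D0 aD) // mul1mx.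
Qed.


Local Notation W := (inW Delta).
Local Notation len := (coxlen Delta).

Lemma ex_min (P : nat -> Prop) : (exists k, P k) ->
  exists k, P k /\ forall j, P j -> (k <= j)%N.
Proof.
move=> [k0 Pk0]; apply: NNPP => H.
suff : forall mm k, (k <= mm)%N -> ~ P k by move/(_ k0 k0 (leqnn _)).
elim=> [|mm IH] k hk Pk; apply: H; exists k; split => // j Pj;
  rewrite leqNgt; apply/negP => jk.
  by move: (leq_trans jk hk).
by apply: (IH j) => //; rewrite -ltnS (leq_trans jk hk).
Qed.

Lemma ex_max (P : nat -> Prop) B : (exists k, P k) ->
  (forall k, P k -> (k <= B)%N) -> exists k, P k /\ forall j, P j -> (j <= k)%N.
Proof.
move=> [k0 Pk0] hB.
have [m0 [Pm hm]] : exists k, P (B - k)%N /\ forall j, P (B - j)%N -> (k <= j)%N.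
  by apply: ex_min; exists (B - k0)%N; rewrite subKn // hB.
exists (B - m0)%N; split => // j Pj.
have hj := hB _ Pj.
have : (m0 <= B - j)%N by apply: hm; rewrite subKn.
lia.
Qed.

Lemma len_uniq g k k' : len g k -> len g k' -> k = k'.
Proof.
case=> [[w [hw sw ew]] h] [[w' [hw' sw' ew']] h'].
have := h w' hw' ew'; have := h' w hw ew; lia.
Qed.

Lemma len_W g k : len g k -> W g.
Proof. by case=> [[w [hw _ ->]] _]; exists w. Qed.

Lemma len_ex g : W g -> exists k, len g k.
Proof.
case=> w [hw e].
have [k [[w0 [hw0 s0 e0]] hk]] := @ex_min
  (fun k => exists w, [/\ {subset w <= Delta}, size w = k & g = prodw w])
  (ex_intro _ (size w) (ex_intro _ w (And3 hw erefl e))).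
exists k; split; first by exists w0.
by move=> u hu eu; apply: hk; exists u.
Qed.

Lemma len0 g : len g 0 -> g = 1%:M.
Proof. by case=> [[w [_ /size0nil -> ->]] _]. Qed.

Lemma len1 : len 1%:M 0.
Proof. by split=> //; exists [::]. Qed.

Lemma W_cons a g : a \in Delta -> W g -> W (refl_mx a *m g).
Proof.
move=> aD [w [hw ->]]; exists (a :: w); split => //.
by move=> x; rewrite inE => /orP [/eqP ->|/hw].
Qed.

Lemma W_mul g h : W g -> W h -> W (g *m h).
Proof.
move=> [w [hw ->]] [u [hu ->]]; exists (w ++ u); rewrite prodw_cat; split => //.
by move=> x; rewrite mem_cat => /orP [/hw|/hu].
Qed.

Lemma len_neg a g k : a \in Delta -> len g k -> neg (a *m g) ->
  (0 < k)%N /\ len (refl_mx a *m g) k.-1.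
Proof.
move=> aD [[w [hw sw ew]] hmin] ng.
have ng' : neg (a *m prodw w) by rewrite -ew.
have [i iw e] := del hw (DPhi aD) (pos_D aD) ng'.
split; first by rewrite -sw (leq_ltn_trans (leq0n i) iw).
split.
  exists (delw i w); split; first by move=> x /delw_sub /hw.
    by rewrite size_delw // sw.
  by rewrite ew e.
move=> u hu eu.
have : (k <= size (a :: u))%N.
  apply: hmin; first by move=> x; rewrite inE => /orP [/eqP ->|/hu].
  by rewrite /= -eu mulmxA refl_invol ?D0 // mul1mx.
rewrite /=; lia.
Qed.

Lemma len_pos a g k : a \in Delta -> len g k -> pos (a *m g) ->
  len (refl_mx a *m g) k.+1.
Proof.
move=> aD hg pg.
have [k' hk'] := len_ex (W_cons aD (len_W hg)).
have ng : neg (a *m (refl_mx a *m g)).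
  by rewrite mulmxA refl_aa ?D0 // mulNmx; apply: negN.
have [k0 hl] := len_neg aD hk' ng.
rewrite mulmxA refl_invol ?D0 // mul1mx in hl.
have e := len_uniq hl hg.
by have -> : k.+1 = k' by rewrite -e prednK.
Qed.

Lemma len_take (w : seq vec) i : {subset w <= Delta} -> len (prodw w) (size w) ->
  len (prodw (take i w)) (size (take i w)).
Proof.
move=> hw [_ hmin]; split.
  by exists (take i w); split => // x /mem_take /hw.
move=> u hu eu.
have : (size w <= size (u ++ drop i w))%N.
  apply: hmin; first by move=> x; rewrite mem_cat => /orP [/hu|/mem_drop /hw].
  by rewrite prodw_cat -eu -prodw_cat cat_take_drop.
by rewrite size_cat -{1}(cat_take_drop i w) size_cat leq_add2r.
Qed.

Lemma len_tail a (w : seq vec) : {subset a :: w <= Delta} ->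
  len (prodw (a :: w)) (size (a :: w)) -> len (prodw w) (size w).
Proof.
move=> hw [_ hmin]; split.
  by exists w; split => // x xw; apply: hw; rewrite inE xw orbT.
move=> u hu eu.
have : (size (a :: w) <= size (a :: u))%N.
  apply: hmin; first by move=> x; rewrite inE => /orP [/eqP ->|/hu //]; apply: hw; rewrite mem_head.
  by rewrite /= eu.
by [].
Qed.

Lemma nz_sub (u : seq vec) : {subset u <= Delta} -> forall a, a \in u -> a != 0.
Proof. by move=> hu a /hu /D0. Qed.

Lemma len_rev (u : seq vec) k : {subset u <= Delta} -> len (prodw u) k ->
  len (prodw (rev u)) k.
Proof.
move=> hu [[v [hv sv ev]] hmin]; split.
  exists (rev v); split; first by move=> x; rewrite mem_rev => /hv.
    by rewrite size_rev.
  exact: inv_uniq (nz_sub hu) (nz_sub hv) ev.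
move=> t ht et.
have hru : {subset rev u <= Delta} by move=> x; rewrite mem_rev => /hu.
have := inv_uniq (nz_sub hru) (nz_sub ht) et; rewrite revK => e.
by rewrite -size_rev; apply: hmin => // x; rewrite mem_rev => /ht.
Qed.

Lemma posJ (J : seq vec) a g : {subset J <= Delta} -> a \in Delta -> a \notin J ->
  inW J g -> pos (a *m g).
Proof.
move=> hJ aD naJ [w [hw ->]]; case: (idx aD) => k ek.
have E : forall v, crd k (v *m prodw w) = crd k v.
  elim: w hw => [|b w IH] hw v /=; first by rewrite mulmx1.
  rewrite mulmxA IH; last by move=> x xw; apply: hw; rewrite inE xw orbT.
  have bJ : b \in J by apply: hw; rewrite mem_head.
  case: (idx (hJ _ bJ)) => j ej.
  rewrite mul_refl /reflv crdB ej crd_D.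
  have -> : (j == k) = false.
    by apply/negP => /eqP jk; move: naJ; rewrite ek -jk -ej bJ.
  by rewrite mulr0 subr0.
have aP : a *m prodw w \in Phi.
  by apply: act_Phi; [move=> x /hw /hJ | exact: DPhi].
case: (posneg aP) => // nb; exfalso; move: (nb k).
by rewrite E ek crd_D eqxx ler10.
Qed.

Lemma redJ (J : seq vec) : {subset J <= Delta} -> forall w g,
  {subset w <= Delta} -> inW J g -> g = prodw w -> len g (size w) ->
  {subset w <= J}.
Proof.
move=> hJ; elim=> [|a w IH] g hw gJ eg hl //.
have aD : a \in Delta by apply: hw; rewrite mem_head.
have hw' : {subset w <= Delta} by move=> x xw; apply: hw; rewrite inE xw orbT.
have eg' : refl_mx a *m g = prodw w.
  by rewrite eg /= mulmxA refl_invol ?D0 // mul1mx.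
have aJ : a \in J.
  apply: contraT => naJ.
  have [_ hmin] := len_pos aD hl (posJ hJ aD naJ gJ).
  by have := hmin w hw' eg'; rewrite /=; lia.
have wJ : {subset w <= J}.
  apply: (IH (prodw w)) => //.
    by case: gJ => u [hu eu]; exists (a :: u); rewrite -eg' eu; split => // x;
      rewrite inE => /orP [/eqP ->|/hu].
  by apply: (@len_tail a); rewrite -?eg.
by move=> x; rewrite inE => /orP [/eqP ->|/wJ].
Qed.


Lemma W_Phi g b : W g -> b \in Phi -> b *m g \in Phi.
Proof. by case=> w [hw ->]; apply: act_Phi. Qed.

Lemma mx_eq_Phi (g1 g2 : mx) :
  (forall b, b \in Phi -> b *m g1 = b *m g2) -> g1 = g2.
Proof.
move=> h; apply: mx_ext => v.
have vs : v \in <<in_tuple Phi>>%VS by case: hPhi => _ sp _ _ _; rewrite sp memvf.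
rewrite (coord_span vs) !mulmx_suml; apply: eq_bigr => i _.
by rewrite -!scalemxAl h // mem_nth.
Qed.

Local Notation P := (undup Phi).

Definition Fg (g : mx) : {ffun 'I_(size P) -> 'I_(size P).+1} :=
  [ffun i : 'I_(size P) => inord (index (P`_i *m g) P)].

Lemma Fg_inj g1 g2 : W g1 -> W g2 -> Fg g1 = Fg g2 -> g1 = g2.
Proof.
move=> h1 h2 e; apply: mx_eq_Phi => b bP.
have bU : b \in P by rewrite mem_undup.
have ib : (index b P < size P)%N by rewrite index_mem.
move/ffunP: e => /(_ (Ordinal ib)); rewrite !ffunE /= nth_index // => /(congr1 (@nat_of_ord _)).
rewrite !inordK ?ltnS ?index_size // => ei.
have m1 : b *m g1 \in P by rewrite mem_undup W_Phi.
have m2 : b *m g2 \in P by rewrite mem_undup W_Phi.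
by rewrite -(nth_index 0 m1) -(nth_index 0 m2) ei.
Qed.

Lemma bound : exists B, forall g k, len g k -> (k <= B)%N.
Proof.
exists #|{ffun 'I_(size P) -> 'I_(size P).+1}| => g k hg.
case: (hg) => [[w [hw sw ew]] _].
have hgw : len (prodw w) (size w) by rewrite -ew sw.
have Wt : forall i, W (prodw (take i w)).
  by move=> i; exists (take i w); split => // x /mem_take /hw.
pose f (i : 'I_k.+1) := Fg (prodw (take i w)).
have finj : injective f.
  move=> i j /Fg_inj e; apply/val_inj => /=.
  have := e (Wt i) (Wt j) => eij.
  have li := len_take i hw hgw; have lj := len_take j hw hgw.
  rewrite eij in li; have := len_uniq li lj.
  by rewrite !size_takel // sw -ltnS.
by have := @leq_card _ _ f finj; rewrite card_ord => /ltnW.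
Qed.

Lemma inW_mul (J : seq vec) g h : inW J g -> inW J h -> inW J (g *m h).
Proof.
move=> [w [hw ->]] [u [hu ->]]; exists (w ++ u); rewrite prodw_cat; split => //.
by move=> x; rewrite mem_cat => /orP [/hw|/hu].
Qed.

Lemma cancel_l g (u v : mx) : W g -> g *m u = g *m v -> u = v.
Proof.
case=> w [hw ->] e.
by rewrite -[u]mul1mx -[v]mul1mx -(prodw_rev' (nz_sub hw)) -!mulmxA e.
Qed.

Lemma cancel_r g (u v : mx) : W g -> u *m g = v *m g -> u = v.
Proof.
case=> w [hw ->] e.
by rewrite -[u]mulmx1 -[v]mulmx1 -(prodw_rev (nz_sub hw)) !mulmxA e.
Qed.

Lemma W_rev (w : seq vec) : {subset w <= Delta} -> W (prodw (rev w)).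
Proof. by move=> hw; exists (rev w); split => // x; rewrite mem_rev => /hw. Qed.


Lemma part2 (X Y : mx -> Prop) : splitting Delta W X Y ->
  forall J : seq vec, {subset J <= Delta} ->
     splitting Delta (inW J) (fun g => X g /\ inW J g) (fun g => Y g /\ inW J g).
Proof.
case=> [[hXW hYW] hXY hsurj hinj hlen] J hJ.
have JW : forall g, inW J g -> W g by move=> g [w [hw ->]]; exists w; split => // x /hw /hJ.
split.
- by split => g [].
- by move=> x y [_ ?] [_ ?]; apply: inW_mul.
- move=> g gJ; have [x [y [hx hy eg]]] := hsurj g (JW g gJ).
  have [a la] := len_ex (hXW x hx); have [b lb] := len_ex (hYW y hy).
  have lxy := hlen x y hx hy a b la lb.
  case: (la) => [[wx [hwx sx ex]] _]; case: (lb) => [[wy [hwy sy ey]] _].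
  have hw : {subset wx ++ wy <= Delta} by move=> z; rewrite mem_cat => /orP [/hwx|/hwy].
  have egw : g = prodw (wx ++ wy) by rewrite prodw_cat -ex -ey.
  have lg : len g (size (wx ++ wy)) by rewrite size_cat sx sy eg.
  have sub := redJ hJ hw gJ egw lg.
  exists x, y; split => //.
    by split => //; exists wx; split => // z zw; apply: sub; rewrite mem_cat zw.
  by split => //; exists wy; split => // z zw; apply: sub; rewrite mem_cat zw orbT.
- by move=> x y x' y' [? _] [? _] [? _] [? _]; apply: hinj.
- by move=> x y [? _] [? _]; apply: hlen.
Qed.


Lemma part1 (X Y : mx -> Prop) : splitting Delta W X Y ->
  (exists x0 y0 : mx,
     [/\ unique_maximal (leL Delta) X x0,
         unique_maximal (leR Delta) Y y0 &
         (forall w0, longest Delta w0 -> x0 *m y0 = w0)]).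
Proof.
case=> [[hXW hYW] hXY hsurj hinj hlen].
have [B hB] := bound.
have ex0 : exists k, exists g, W g /\ len g k.
  by exists 0%N, 1%:M; split; [apply: len_W len1 | apply: len1].
have hB' : forall k, (exists g, W g /\ len g k) -> (k <= B)%N.
  by move=> k [g [_ hg]]; apply: hB hg.
have [K [[g0 [g0W hK]] hmax]] := ex_max ex0 hB'.
have lenle : forall g k, len g k -> (k <= K)%N.
  by move=> g k hg; apply: hmax; exists g; split => //; apply: len_W hg.
have g0neg : forall a, a \in Delta -> neg (a *m g0).
  move=> a aD; case: (posneg (W_Phi g0W (DPhi aD))) => // p.
  by have := lenle _ _ (len_pos aD hK p); rewrite ltnn.
have g0negall : forall b, b \in Phi -> pos b -> neg (b *m g0).
  move=> b bP pb i; have [e _] := span_root bP.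
  rewrite e mulmx_suml linear_sum /=; apply: sumr_le0 => j _.
  rewrite -scalemxAl linearZ /=; apply: mulr_ge0_le0; first exact: pb.
  by apply: g0neg; rewrite mem_nth.
have F : forall k h, len h k -> len (h *m g0) (K - k) /\ (k <= K)%N.
  elim=> [|k IH] h hh.
    by rewrite (len0 hh) mul1mx subn0.
  case: (hh) => [[[|a w] [hw sw ew]] _] //.
  have aD : a \in Delta by apply: hw; rewrite mem_head.
  have hh' : len (prodw w) k.
    have e : size w = k by case: sw.
    by rewrite -e; apply: (@len_tail a) => //; rewrite -ew sw.
  have [hg' kK] := IH _ hh'.
  have ahP : a *m prodw w \in Phi by apply: W_Phi (len_W hh') (DPhi aD).
  case: (posneg ahP) => p; last first.
    have [_ hl] := len_neg aD hh' p.
    rewrite -[refl_mx a *m prodw w]/(prodw (a :: w)) -ew in hl.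
    by have := len_uniq hl hh; lia.
  have ng : neg (a *m (prodw w *m g0)) by rewrite mulmxA; apply: g0negall.
  have [kpos hl] := len_neg aD hg' ng.
  rewrite mulmxA -[refl_mx a *m prodw w]/(prodw (a :: w)) -ew in hl.
  split; last by lia.
  by have -> : (K - k.+1 = (K - k).-1)%N by lia.
have g0inv : g0 *m g0 = 1%:M.
  by have [h _] := F K g0 hK; rewrite subnn in h; apply: len0.
case: (hK) => [[w0 [hw0 sw0 ew0]] _].
have rg0 : prodw (rev w0) = g0.
  by rewrite -[prodw (rev w0)]mulmx1 -g0inv mulmxA {1}ew0 prodw_rev' ?mul1mx //; apply: nz_sub.
have keyL : forall h k, len h k ->
    exists z, [/\ W z, z *m h = g0 & len z (K - k)].
  move=> h k hh; case: (hh) => [[w [hw sw ew]] _].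
  exists (g0 *m prodw (rev w)); split.
  - by apply: W_mul => //; apply: W_rev.
  - by rewrite -mulmxA ew prodw_rev' ?mulmx1 //; apply: nz_sub.
  have [hl _] := F k h hh.
  have hw' : {subset w ++ rev w0 <= Delta}.
    by move=> x; rewrite mem_cat mem_rev => /orP [/hw|/hw0].
  rewrite ew -rg0 -prodw_cat in hl.
  have := len_rev hw' hl; rewrite rev_cat revK prodw_cat.
  by rewrite {1}ew0.
have keyR : forall h k, len h k ->
    exists z, [/\ W z, h *m z = g0 & len z (K - k)].
  move=> h k hh; case: (hh) => [[w [hw sw ew]] _].
  exists (prodw (rev w) *m g0); split.
  - by apply: W_mul => //; apply: W_rev.
  - by rewrite mulmxA ew prodw_rev ?mul1mx //; apply: nz_sub.
  have hr : len (prodw (rev w)) k by apply: len_rev => //; rewrite -ew.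
  by have [hl _] := F k _ hr.
have [x0 [y0 [hx0 hy0 e0]]] := hsurj g0 g0W.
have [a0 la0] := len_ex (hXW x0 hx0); have [b0 lb0] := len_ex (hYW y0 hy0).
have K0 : K = (a0 + b0)%N by apply: len_uniq hK _; rewrite e0; apply: hlen.
have Xle : forall x, X x -> leL Delta x x0.
  move=> x hx; split; [exact: hXW | exact: hXW |].
  have [lx hlx] := len_ex (hXW x hx).
  have hh := hlen x y0 hx hy0 lx b0 hlx lb0.
  have [z [zW ez lz]] := keyL _ _ hh.
  have kk := lenle _ _ hh.
  exists z; split => //.
    by apply: (cancel_r (hYW y0 hy0)); rewrite -e0 -ez mulmxA.
  move=> a b la lb; rewrite (len_uniq la lz) (len_uniq lb hlx).
  have -> : (K - (lx + b0) + lx = a0)%N by lia.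
  by rewrite -(cancel_r (hYW y0 hy0) (_ : x0 *m y0 = z *m x *m y0)) // -e0 -ez mulmxA.
have Yle : forall y, Y y -> leR Delta y y0.
  move=> y hy; split; [exact: hYW | exact: hYW |].
  have [ly hly] := len_ex (hYW y hy).
  have hh := hlen x0 y hx0 hy a0 ly la0 hly.
  have [z [zW ez lz]] := keyR _ _ hh.
  have kk := lenle _ _ hh.
  have eyz : y *m z = y0 by apply: (cancel_l (hXW x0 hx0)); rewrite -e0 -ez mulmxA.
  exists z; split => //.
  move=> a b la lb; rewrite (len_uniq la hly) (len_uniq lb lz).
  have -> : (ly + (K - (a0 + ly)) = b0)%N by lia.
  by rewrite eyz.
have len_one : forall z, len z 0 -> z = 1%:M by move=> z; apply: len0.
exists x0, y0; split.
- split.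
    split => // x' hx' [_ x'W [z [zW ex' hadd]]].
    have [_ _ [z' [z'W ex0' hadd']]] := Xle x' hx'.
    have [lz hlz] := len_ex zW; have [lz' hlz'] := len_ex z'W.
    have [lx' hlx'] := len_ex x'W.
    have h1 := hadd _ _ hlz la0; rewrite -ex' in h1.
    have h2 := hadd' _ _ hlz' hlx'; rewrite -ex0' in h2.
    have e1 := len_uniq h1 hlx'; have e2 := len_uniq h2 la0.
    have lz0 : lz = 0%N by lia.
    by rewrite ex' (len_one z) ?mul1mx // -lz0.
  by move=> x' [hx' hm]; symmetry; apply: hm => //; apply: Xle.
- split.
    split => // y' hy' [_ y'W [z [zW ey' hadd]]].
    have [_ _ [z' [z'W ey0 hadd']]] := Yle y' hy'.
    have [lz hlz] := len_ex zW; have [lz' hlz'] := len_ex z'W.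
    have [ly' hly'] := len_ex y'W.
    have h1 := hadd _ _ lb0 hlz; rewrite -ey' in h1.
    have h2 := hadd' _ _ hly' hlz'; rewrite -ey0 in h2.
    have e1 := len_uniq h1 hly'; have e2 := len_uniq h2 lb0.
    have lz0 : lz = 0%N by lia.
    by rewrite ey' (len_one z) ?mulmx1 // -lz0.
  by move=> y' [hy' hm]; symmetry; apply: hm => //; apply: Yle.
- move=> w0' [w0W hlong].
  have [l hl] := len_ex w0W.
  have [z [zW ez lz]] := keyL _ _ hl.
  have := hlong g0 K l g0W hK hl; have := lenle _ _ hl => h1 h2.
  have lz0 : (K - l = 0)%N by lia.
  by rewrite -e0 -ez (len_one z) ?mul1mx // -lz0.
Qed.

End Root.

Unset Implicit Arguments.
Set Strict Implicit.

Theorem proposition6p1 (R : realFieldType) (n : nat) (Phi Delta : seq 'rV[R]_n)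
  (X Y : 'M[R]_n -> Prop) :
  is_root_system Phi -> is_simple_system Phi Delta ->
  splitting Delta (inW Delta) X Y ->
  (exists x0 y0 : 'M[R]_n,
     [/\ unique_maximal (leL Delta) X x0,
         unique_maximal (leR Delta) Y y0 &
         (forall w0, longest Delta w0 -> x0 *m y0 = w0)]) /\
  (forall J : seq 'rV[R]_n, {subset J <= Delta} ->
     splitting Delta (inW J) (fun g => X g /\ inW J g) (fun g => Y g /\ inW J g)).
Proof.
move=> hPhi hD hs; split; first exact: (part1 hPhi hD hs).
exact: (part2 hPhi hD hs).
Qed.
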